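(* Let $\mathbb{F}$ be a field and $n\ge2$. Let $\mathcal{A}$ be a nonempty set of $(n-1)$-dimensional subspaces of $\mathbb{F}^n$ and $\mathcal{B}$ a nonempty set of $1$-dimensional subspaces of $\mathbb{F}^n$ such that $V_1\not\subseteq V_2$ for all $V_1\in\mathcal{B}$ and $V_2\in\mathcal{A}$. Then $S(\mathcal{A},\mathcal{B})=\{A\in M(n,\mathbb{F}) : \mathrm{Im}(A)\in\mathcal{A},\ \ker(A)\in\mathcal{B}\}$ is an isolated subsemigroup of $M(n,\mathbb{F})$.
   Context: $M(n,\mathbb{F})$ is the semigroup of $n\times n$ matrices over $\mathbb{F}$ under multiplication, identified with linear operators on $\mathbb{F}^n$. A subsemigroup $T$ of a semigroup $S$ is isolated if for all $x\in S$ and all positive integers $m$, $x^m\in T$ implies $x\in T$. *)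

(* Defs.v *)
From HB Require Import structures.
From mathcomp Require Import all_boot all_order all_algebra.
Set Implicit Arguments. Unset Strict Implicit. Unset Printing Implicit Defensive.
Import GRing.Theory.
Local Open Scope ring_scope.

(* An n x n matrix A is identified with the linear operator x |-> A *m x on
   column vectors F^n = 'cV[F]_n. Subspaces of F^n are {vspace 'cV[F]_n}. *)

Definition mx_op (F : fieldType) (n : nat) (A : 'M[F]_n) : 'End('cV[F]_n) :=
  linfun (mulmx A).

Definition mx_im (F : fieldType) (n : nat) (A : 'M[F]_n) : {vspace 'cV[F]_n} :=
  limg (mx_op A).

Definition mx_ker (F : fieldType) (n : nat) (A : 'M[F]_n) : {vspace 'cV[F]_n} :=
  lker (mx_op A).

Definition S_AB (F : fieldType) (n : nat)
  (SA SB : {vspace 'cV[F]_n} -> Prop) (A : 'M[F]_n) : Prop :=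
  SA (mx_im A) /\ SB (mx_ker A).

Definition subsemigroup (F : fieldType) (n : nat) (T : ('M[F]_n) -> Prop) : Prop :=
  (exists A, T A) /\ (forall A B, T A -> T B -> T (A *m B)).

Definition isolated (F : fieldType) (n : nat) (T : ('M[F]_n) -> Prop) : Prop :=
  forall (x : 'M[F]_n) (m : nat), (0 < m)%N -> T (x ^+ m) -> T x.

(* Main.v *)
Require Import Defs.
From HB Require Import structures.
From mathcomp Require Import all_boot all_order all_algebra.
From mathcomp Require Import zify.
Import GRing.Theory.
Local Open Scope ring_scope.

Lemma arith1 (a n : nat) : (1 < n)%N -> (a + n.-1)%N = n -> a = 1%N.
Proof. lia. Qed.

Lemma arith3 (x n : nat) : (1 < n)%N -> (x + 0)%N = (n.-1 + 1)%N -> x = n.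
Proof. lia. Qed.

Section Aux.
Variables (F : fieldType) (n : nat).
Implicit Types A B : 'M[F]_n.

Lemma mx_op_mul A B : mx_op (A *m B) = (mx_op A \o mx_op B)%VF.
Proof. by apply/lfunP => x; rewrite comp_lfunE !lfunE /= mulmxA. Qed.

Lemma im_mul A B : mx_im (A *m B) = (mx_op A @: mx_im B)%VS.
Proof. by rewrite /mx_im mx_op_mul limg_comp. Qed.

Lemma im_sub A B : (mx_im (A *m B) <= mx_im A)%VS.
Proof. by rewrite im_mul limgS ?subvf. Qed.

Lemma ker_sub A B : (mx_ker B <= mx_ker (A *m B))%VS.
Proof.
apply/subvP => x; rewrite !memv_ker mx_op_mul comp_lfunE => /eqP ->.
by rewrite linear0.
Qed.

Lemma dim_ker_im (f : 'End('cV[F]_n)) : addn (\dim (lker f)) (\dim (limg f)) = n.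
Proof.
have := limg_ker_dim f fullv; rewrite capfv dimvf /=.
rewrite dim_matrix => ->.
exact: muln1.
Qed.

Lemma dim_all (V : {vspace 'cV[F]_n}) : (\dim V <= n)%N.
Proof. by have := dimvS (subvf V); rewrite dimvf dim_matrix (mulr1 (n : nat)). Qed.

Lemma exists_mx (f : 'End('cV[F]_n)) : exists A, mx_op A = f.
Proof.
exists (\matrix_(i, j) (f (delta_mx j 0)) i 0).
apply/lfunP => x; rewrite lfunE /=.
rewrite [in RHS](matrix_sum_delta x) linear_sum /=.
apply/matrixP => i k; rewrite (ord1 k) !mxE summxE.
apply: eq_bigr => j _; rewrite big_ord1 linearZ /= !mxE (ord1 (_ : 'I_1)).
by rewrite mulrC.
Qed.


Lemma disjoint_line (K V : {vspace 'cV[F]_n}) :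
  \dim K = 1%N -> ~~ (K <= V)%VS -> (K :&: V = 0)%VS.
Proof.
move=> hK hKV; apply/eqP; rewrite -dimv_eq0.
case E: (\dim (K :&: V)) => [|m] //.
have: (K :&: V)%VS == K by rewrite eqEdim capvSl /= hK E.
by move/eqP => e; move: hKV; rewrite -e capvSr.
Qed.

Lemma mx_pow (x : 'M[F]_n) k : x ^+ k.+1 = x *m x ^+ k.
Proof. by rewrite exprS mulmxE. Qed.

Lemma mx_powr (x : 'M[F]_n) k : x ^+ k.+1 = x ^+ k *m x.
Proof. by rewrite exprSr mulmxE. Qed.

Lemma dim_full (V : {vspace 'cV[F]_n}) : \dim V = n -> V = fullv.
Proof.
move=> h; apply/eqP; rewrite eqEdim subvf /= h.
by rewrite dimvf dim_matrix (mulr1 (n : nat)).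
Qed.

Lemma dim_im_pow (x : 'M[F]_n) : \dim (mx_im x) = n ->
  forall j, \dim (mx_im (x ^+ j)) = n.
Proof.
move=> hx; elim=> [|j IH].
  have := dim_ker_im (mx_op (1 : 'M[F]_n)).
  have -> : lker (mx_op (1 : 'M[F]_n)) = 0%VS.
    apply/eqP; rewrite -subv0; apply/subvP => v.
    by rewrite memv_ker lfunE /= mul1mx memv0.
  by rewrite dimv0.
by rewrite mx_pow im_mul (dim_full _ IH).
Qed.
End Aux.
Arguments dim_all {F n}.
Arguments dim_ker_im {F n}.
Arguments dim_im_pow {F n}.
Arguments disjoint_line {F n}.
Arguments exists_mx {F n}.
Arguments dim_full {F n}.

Theorem lemma26 (F : fieldType) (n : nat) (hn : (2 <= n)%N)
  (SA SB : {vspace 'cV[F]_n} -> Prop)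
  (hA : forall V, SA V -> \dim V = n.-1)
  (hB : forall V, SB V -> \dim V = 1%N)
  (hAne : exists V, SA V) (hBne : exists V, SB V)
  (hAB : forall V1 V2, SB V1 -> SA V2 -> ~~ (V1 <= V2)%VS) :
  subsemigroup (S_AB SA SB) /\ isolated (S_AB SA SB).
Proof.
split; last first.
  move=> x [|k] // _ [hi hk].
  have s1 : (mx_im (x ^+ k.+1) <= mx_im x)%VS by rewrite mx_pow im_sub.
  have s2 : (mx_ker x <= mx_ker (x ^+ k.+1))%VS by rewrite mx_powr ker_sub.
  have di := hA _ hi; have dk := hB _ hk.
  have d1 := dimvS s1; have d2 := dim_all (mx_im x).
  have dn : \dim (mx_im x) != n.
    apply/eqP => /dim_im_pow /(_ k.+1); rewrite di; lia.
  have dix : \dim (mx_im x) = n.-1 by lia.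
  have ei : mx_im (x ^+ k.+1) = mx_im x.
    by apply/eqP; rewrite eqEdim s1 /= di dix.
  have dkx : \dim (mx_ker x) = 1%N.
    have := dim_ker_im (mx_op x); rewrite -/(mx_ker x) -/(mx_im x) dix; exact: arith1.
  have ek : mx_ker x = mx_ker (x ^+ k.+1).
    by apply/eqP; rewrite eqEdim s2 /= dk dkx.
  by split; [rewrite -ei | rewrite ek].
split.
  case: hAne => V hV; case: hBne => K hK.
  have dV := hA _ hV; have dK := hB _ hK.
  have dis : (K :&: V = 0)%VS by apply: disjoint_line => //; exact: hAB.
  pose f := daddv_pi V K.
  have s1 : (K <= lker f)%VS.
    apply/subvP => k Kk; rewrite memv_ker.
    have := daddv_pi_add (w := k) (etrans (capvC V K) dis) (subvP (addvSr V K) _ Kk).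
    rewrite (daddv_pi_id dis Kk) => /(canRL (addrK k)); rewrite subrr => ->.
    by [].
  have dis' : (V :&: K = 0)%VS by rewrite capvC.
  have full : (V + K)%VS = fullv.
    apply: dim_full; apply: arith3 hn _.
    by have := dimv_sum_cap V K; rewrite dis' dimv0 dV dK.
  have s3 : (lker f <= K)%VS.
    apply/subvP => w; rewrite memv_ker => /eqP fw0.
    have := daddv_pi_add dis' (w := w); rewrite full memvf fw0 add0r => /(_ isT) <-.
    exact: memv_pi.
  have eK : lker f = K by apply/eqP; rewrite eqEsubv s1 s3.
  have s2 : (limg f <= V)%VS.
    by apply/subvP => y /memv_imgP [x _ ->]; exact: memv_pi.
  have e := dim_ker_im f; rewrite eK dK in e.
  have eV : limg f = V.
    by apply/eqP; rewrite eqEdim s2 /= dV; rewrite -[X in X.-1]e add1n.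
  have [A hAf] := exists_mx f.
  by exists A; split; rewrite /mx_im /mx_ker hAf ?eK ?eV.
move=> A B [hAi hAk] [hBi hBk].
have dis : (mx_ker A :&: mx_im B = 0)%VS by apply: disjoint_line; auto.
have dAB : \dim (mx_im (A *m B)) = n.-1.
  by rewrite im_mul limg_dim_eq ?hA // capvC.
have ei : mx_im (A *m B) = mx_im A.
  by apply/eqP; rewrite eqEdim im_sub /= dAB hA.
have dk : \dim (mx_ker (A *m B)) = 1%N.
  have := dim_ker_im (mx_op (A *m B)); rewrite -/(mx_ker _) -/(mx_im _) dAB; exact: arith1.
have ek : mx_ker (A *m B) = mx_ker B.
  by apply/eqP; rewrite eq_sym eqEdim ker_sub /= dk hB.
by split; [rewrite ei | rewrite ek].
Qed.
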